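(* Let $\delta>0$. There exist an integer $N$ and a real $\kappa>0$ such that for all $c\ge0$ and all integers $n\ge\max(N,\kappa c)$, $$\lambda_n(c)\le e^{-\delta(n-\kappa c)} .$$
   Context: For $c>0$, $\lambda_n(c)$, $n\ge0$, are the eigenvalues, arranged so that $1>\lambda_0(c)>\lambda_1(c)>\cdots>0$, of the compact self-adjoint operator on $L^2([-1,1])$ $$F_c\psi(x)=\int_{-1}^1\frac{\sin c(x-y)}{\pi(x-y)}\,\psi(y)\,dy,$$ whose eigenfunctions are the prolate spheroidal wave functions $\psi_{n,c}$ (the bounded solutions of $((1-x^2)\psi')'+(\chi_n(c)-c^2x^2)\psi=0$ on $[-1,1]$ with eigenvalue $\chi_n(c)$ increasing in $n$). *)

(* Defs.v *)
From Stdlib Require Import Reals.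
Open Scope R_scope.

(* The sinc kernel  sin(c t) / (pi t), extended continuously by c/pi at t = 0. *)
Definition sinc_kernel (c t : R) : R :=
  if Req_EM_T t 0 then c / PI else sin (c * t) / (PI * t).

Definition is_eigenfunction (c mu : R) (psi : R -> R) : Prop :=
  (forall x, -1 <= x <= 1 -> continuity_pt psi x) /\
  (exists x, -1 <= x <= 1 /\ psi x <> 0) /\
  (forall x, -1 <= x <= 1 ->
     exists pr : Riemann_integrable (fun y => sinc_kernel c (x - y) * psi y) (-1) 1,
       RiemannInt pr = mu * psi x).

Definition is_eigenvalue (c mu : R) : Prop :=
  exists psi, is_eigenfunction c mu psi.

Definition prolate_eigenvalues (c : R) (lam : nat -> R) : Prop :=
  (forall n, 0 < lam n < 1) /\
  (forall n, lam (S n) < lam n) /\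
  (forall n, is_eigenvalue c (lam n)) /\
  (forall mu, mu <> 0 -> is_eigenvalue c mu -> exists n, lam n = mu).

(* Main.v *)
Require Import Defs.
From Stdlib Require Import Reals.
Open Scope R_scope.
From Coquelicot Require Import Coquelicot.
From Stdlib Require Import Reals Lra Lia Factorial Classical IndefiniteDescription.
Open Scope R_scope.


Fixpoint sm (n : nat) (f : nat -> R) : R :=
  match n with O => 0 | S n => sm n f + f n end.

Lemma sm_ext n f g : (forall k, (k < n)%nat -> f k = g k) -> sm n f = sm n g.
Proof. induction n; simpl; intros H; auto. rewrite IHn by (intros; apply H; lia). rewrite (H n) by lia; auto. Qed.

Lemma sm_S0 n f : sm (S n) f = f O + sm n (fun k => f (S k)).
Proof. induction n; simpl in *. ring. rewrite IHn. ring. Qed.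

Lemma sum_f_R0_sm f n : sum_f_R0 f n = sm (S n) f.
Proof. induction n; simpl in *; auto. ring. rewrite IHn. simpl. ring. Qed.

Lemma sm_scal a n f : sm n (fun k => a * f k) = a * sm n f.
Proof. induction n; simpl. ring. rewrite IHn; ring. Qed.

Lemma sm_plus n f g : sm n (fun k => f k + g k) = sm n f + sm n g.
Proof. induction n; simpl. ring. rewrite IHn; ring. Qed.

Lemma sm_nonneg n f : (forall k, (k < n)%nat -> 0 <= f k) -> 0 <= sm n f.
Proof. induction n; simpl; intros; try lra. assert (0 <= f n) by (apply H; lia).
  assert (0 <= sm n f) by (apply IHn; intros; apply H; lia). lra. Qed.

Lemma sm_le n f g : (forall k, (k < n)%nat -> f k <= g k) -> sm n f <= sm n g.
Proof. induction n; simpl; intros; try lra. assert (f n <= g n) by (apply H; lia).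
  assert (sm n f <= sm n g) by (apply IHn; intros; apply H; lia). lra. Qed.

Lemma sm_single n f k : (k < n)%nat -> (forall l, (l < n)%nat -> l <> k -> f l = 0) -> sm n f = f k.
Proof.
  induction n; simpl; intros Hk H; [lia|].
  destruct (Nat.eq_dec k n) as [->|Hne].
  - rewrite (sm_ext n f (fun _ => 0)). clear. assert (sm n (fun _ => 0) = 0) by (induction n; simpl; auto; rewrite IHn; ring). rewrite H; ring.
    intros; apply H; lia.
  - rewrite IHn by (auto; try lia; intros; apply H; lia). rewrite (H n) by lia. ring.
Qed.

Lemma sm_pos n f k : (k < n)%nat -> (forall l, (l < n)%nat -> 0 <= f l) -> 0 < f k -> 0 < sm n f.
Proof.
  induction n; simpl; intros Hk H Hp; [lia|].
  destruct (Nat.eq_dec k n) as [->|Hne].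
  - assert (0 <= sm n f) by (apply sm_nonneg; intros; apply H; lia). lra.
  - assert (0 < sm n f) by (apply IHn; auto; try lia). assert (0 <= f n) by (apply H; lia). lra.
Qed.

Lemma Dsin j : (forall z, Derive_n sin (2*j) z = (-1)^j * sin z) /\
               (forall z, Derive_n sin (S (2*j)) z = (-1)^j * cos z).
Proof.
  induction j.
  - split; intros z; simpl.
    + ring.
    + replace (Derive _ z) with (cos z). ring. symmetry; apply is_derive_unique. auto_derive; auto; ring.
  - destruct IHj as [H1 H2]. 
    assert (H3 : forall z, Derive_n sin (S (S (2*j))) z = (-1)^(S j) * sin z).
    { intros z. simpl Derive_n at 1. rewrite (Derive_ext _ (fun z => (-1)^j * cos z)) by apply H2.
      rewrite (is_derive_unique _ z ((-1)^(S j) * sin z)); auto. auto_derive; auto. simpl; ring. }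
    replace (2 * S j)%nat with (S (S (2*j))) by lia. split; auto.
    intros z. simpl Derive_n at 1. rewrite (Derive_ext _ (fun z => (-1)^(S j) * sin z)) by apply H3.
    rewrite (is_derive_unique _ z ((-1)^(S j) * cos z)); auto. auto_derive; auto. simpl. rewrite Rmult_1_l. reflexivity.
Qed.

Lemma Dsin_bound k z : Rabs (Derive_n sin k z) <= 1.
Proof.
  destruct (Nat.Even_or_Odd k) as [[j ->]|[j ->]].
  - rewrite (proj1 (Dsin j)). rewrite Rabs_mult, pow_1_abs. pose proof (SIN_bound z). 
    apply Rabs_le in H. lra.
  - replace (2*j+1)%nat with (S (2*j)) by lia. rewrite (proj2 (Dsin j)). rewrite Rabs_mult, pow_1_abs. pose proof (COS_bound z).
    apply Rabs_le in H. lra.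
Qed.

Lemma Dsin_even j : Derive_n sin (2*j) 0 = 0.
Proof. rewrite (proj1 (Dsin j)), sin_0. ring. Qed.

Lemma Dsin_1 : Derive_n sin 1 0 = 1.
Proof. rewrite (proj2 (Dsin 0)), cos_0. simpl; ring. Qed.

Lemma ex_Dsin k t : ex_derive_n sin k t.
Proof.
  destruct k; simpl; auto.
  destruct (Nat.Even_or_Odd k) as [[j ->]|[j ->]].
  - apply (ex_derive_ext (fun z => (-1)^j * sin z)). intros; symmetry; apply (proj1 (Dsin j)).
    auto_derive; auto.
  - replace (2*j+1)%nat with (S (2*j)) by lia.
    apply (ex_derive_ext (fun z => (-1)^j * cos z)). intros; symmetry; apply (proj2 (Dsin j)).
    auto_derive; auto.
Qed.


Ltac nz := repeat split; first [apply INR_fact_neq_0 | apply PI_neq0 | lra | nra].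

Definition Dj k := Derive_n sin k 0.
Definition W c j := c / PI * c^j * Dj (S j) / INR (fact (S j)).
Definition Q m c t := sm m (fun j => W c j * t^j).
Definition eps m c := c / PI * (2*c)^m / INR (fact (S m)).

Lemma Q_even m c t : Q m c (-t) = Q m c t.
Proof.
  unfold Q; apply sm_ext; intros j _.
  destruct (Nat.Even_or_Odd j) as [[i ->]|[i ->]].
  - rewrite pow_mult. replace ((-t)^2) with (t^2) by ring. rewrite <- pow_mult. auto.
  - unfold W, Dj. replace (S (2*i+1)) with (2*(S i))%nat by lia. rewrite Dsin_even. field.
    nz.
Qed.

Lemma K_even c t : sinc_kernel c (-t) = sinc_kernel c t.
Proof.
  unfold sinc_kernel. destruct (Req_EM_T (-t) 0); destruct (Req_EM_T t 0); auto; try lra.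
  replace (c * - t) with (- (c*t)) by ring. rewrite sin_neg. field. nz.
Qed.

Lemma PI_pos' : 0 < PI. Proof. apply PI_RGT_0. Qed.

Lemma eps_nonneg m c : 0 <= c -> 0 <= eps m c.
Proof.
  intros. unfold eps. pose proof PI_pos'. pose proof (INR_fact_lt_0 (S m)).
  apply Rmult_le_pos. apply Rmult_le_pos. apply Rmult_le_pos; auto. left; apply Rinv_0_lt_compat; auto.
  apply pow_le; lra. left; apply Rinv_0_lt_compat; auto.
Qed.

Lemma approx_pos m c t : 0 <= c -> 0 < t <= 2 -> Rabs (sinc_kernel c t - Q m c t) <= eps m c.
Proof.
  intros Hc Ht. pose proof PI_pos' as Hpi. pose proof (INR_fact_lt_0 (S m)) as Hf.
  unfold sinc_kernel. destruct (Req_EM_T t 0); [lra|].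
  destruct (Req_dec c 0) as [->|Hc0].
  - unfold Q, W. rewrite (sm_ext _ _ (fun _ => 0 * 0)).
    rewrite sm_scal. replace (0 * t) with 0 by ring. rewrite sin_0. unfold eps.
    replace (0/(PI*t) - 0 * sm m (fun _ => 0)) with 0 by (field; nz). rewrite Rabs_R0.
    right. field. nz.
    intros; field; nz.
  - set (u := c * t). assert (Hu : 0 < u) by (unfold u; nra).
    destruct (Taylor_Lagrange sin m 0 u Hu) as [z [Hz Htay]].
    { intros; apply ex_Dsin. }
    rewrite sum_f_R0_sm, sm_S0 in Htay.
    set (S0 := sm m (fun j => u^j * Dj (S j) / INR (fact (S j)))).
    assert (HQ : Q m c t = c / PI * S0).
    { unfold Q, S0. rewrite <- sm_scal. apply sm_ext. intros j _. unfold W, u. rewrite Rpow_mult_distr. field.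
      nz. }
    assert (HS : sm m (fun k => (u - 0) ^ S k / INR (fact (S k)) * Derive_n sin (S k) 0) = u * S0).
    { unfold S0. rewrite <- sm_scal. apply sm_ext. intros j _. unfold Dj. replace (u - 0) with u by ring. rewrite <- tech_pow_Rmult. field.
      apply INR_fact_neq_0. }
    rewrite HS in Htay. 
    assert (Hg0 : (u-0)^0/INR(fact 0)*Derive_n sin 0 0 = 0) by (simpl; rewrite sin_0; ring).
    rewrite Hg0 in Htay.
    rewrite HQ. fold u. rewrite Htay.
    replace ((0 + u * S0 + (u - 0) ^ S m / INR (fact (S m)) * Derive_n sin (S m) z) / (PI * t) -
      c / PI * S0) with (c/PI * (u^m / INR (fact (S m)) * Derive_n sin (S m) z)).
    2:{ replace (u - 0) with u by ring. rewrite <- tech_pow_Rmult. unfold u. field. nz. }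
    unfold eps. rewrite Rabs_mult. rewrite (Rabs_right (c/PI)) by (apply Rle_ge, Rdiv_le_0_compat; lra).
    rewrite Rabs_mult. rewrite Rabs_right.
    2:{ apply Rle_ge, Rdiv_le_0_compat; auto. apply pow_le; lra. }
    assert (u^m <= (2*c)^m) by (apply pow_incr; unfold u; nra).
    pose proof (Dsin_bound (S m) z).
    assert (u ^ m / INR (fact (S m)) * Rabs (Derive_n sin (S m) z) <= (2*c)^m / INR (fact (S m))).
    { apply Rle_trans with (u ^ m / INR (fact (S m)) * 1).
      apply Rmult_le_compat_l; auto. apply Rdiv_le_0_compat; auto. apply pow_le; lra.
      rewrite Rmult_1_r. apply Rmult_le_compat_r; auto. left; apply Rinv_0_lt_compat; auto. }
    replace (c / PI * (2 * c) ^ m / INR (fact (S m))) with (c/PI * ((2 * c) ^ m / INR (fact (S m)))) by (unfold Rdiv; ring).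
    apply Rmult_le_compat_l; auto. apply Rdiv_le_0_compat; lra.
Qed.

Lemma approx m c t : 0 <= c -> Rabs t <= 2 -> Rabs (sinc_kernel c t - Q m c t) <= eps m c.
Proof.
  intros Hc Ht. pose proof PI_pos' as Hpi.
  destruct (Rtotal_order t 0) as [Hn|[H0|Hp]].
  - rewrite <- K_even, <- Q_even. apply approx_pos; auto. rewrite Rabs_left in Ht; lra.
  - subst t. unfold sinc_kernel. destruct (Req_EM_T 0 0); [|lra].
    destruct m.
    + unfold Q, eps; simpl. rewrite Rminus_0_r, Rabs_right. right; field; nz.
      apply Rle_ge, Rdiv_le_0_compat; lra.
    + unfold Q. rewrite sm_S0. rewrite (sm_ext _ _ (fun _ => 0)).
      2:{ intros; simpl; ring. }
      assert (sm m (fun _ => 0) = 0) by (clear; induction m; simpl; auto; rewrite IHm; ring).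
      rewrite H. unfold W, Dj. rewrite Dsin_1. simpl.
      replace (c / PI - (c / PI * 1 * 1 / 1 * 1 + 0)) with 0 by (field; nz).
      rewrite Rabs_R0. apply eps_nonneg; auto.
  - apply approx_pos; auto. rewrite Rabs_right in Ht; lra.
Qed.


Notation cont f x := (@continuous R_UniformSpace R_UniformSpace f x).

Definition Int (g : R -> R) := RInt g (-1) 1.
Definition C1 (f : R -> R) := forall x : R, -1 <= x <= 1 -> cont f x.
Definition Ex (g : R -> R) := ex_RInt g (-1) 1.

Lemma C1_ex f : C1 f -> Ex f.
Proof. intros H. apply (ex_RInt_continuous (V:=R_CompleteNormedModule)). intros z. rewrite Rmin_left, Rmax_right by lra. apply H. Qed.

Lemma Call_C1 f : (forall x : R, cont f x) -> C1 f.
Proof. intros H x _; apply H. Qed.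

Lemma cont_mult f g x : cont f x -> cont g x -> cont (fun y => f y * g y) x.
Proof. intros; apply (continuous_mult f g); auto. Qed.
Lemma cont_plus f g x : cont f x -> cont g x -> cont (fun y => f y + g y) x.
Proof. intros; apply (continuous_plus f g); auto. Qed.
Lemma cont_const (a x : R) : cont (fun _ : R => a) x.
Proof. apply continuous_const. Qed.
Lemma cont_pow i x : cont (fun y => y ^ i) x.
Proof. apply (ex_derive_continuous (K:=R_AbsRing) (V:=R_NormedModule)). auto_derive; auto. Qed.
Lemma cont_powl a b i x : cont (fun y => (a + b * y) ^ i) x.
Proof. apply (ex_derive_continuous (K:=R_AbsRing) (V:=R_NormedModule)). auto_derive; auto. Qed.
Lemma cont_sm n (F : nat -> R -> R) x : (forall k, (k < n)%nat -> cont (F k) x) -> cont (fun y => sm n (fun k => F k y)) x.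
Proof.
  induction n; simpl; intros H. apply cont_const. apply cont_plus. apply IHn; intros; apply H; lia. apply H; lia.
Qed.

Lemma C1_mult f g : C1 f -> C1 g -> C1 (fun y => f y * g y).
Proof. intros Hf Hg x Hx; apply cont_mult; auto. Qed.
Lemma C1_plus f g : C1 f -> C1 g -> C1 (fun y => f y + g y).
Proof. intros Hf Hg x Hx; apply cont_plus; auto. Qed.
Lemma C1_sm n (F : nat -> R -> R) : (forall k, (k < n)%nat -> C1 (F k)) -> C1 (fun y => sm n (fun k => F k y)).
Proof. intros H x Hx; apply cont_sm; intros; apply H; auto. Qed.
Lemma C1_pow_mult i f : C1 f -> C1 (fun y => y ^ i * f y).
Proof. intros; apply C1_mult; auto. apply Call_C1, cont_pow. Qed.

Lemma Int_plus f g : Ex f -> Ex g -> Int (fun y => f y + g y) = Int f + Int g.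
Proof. intros. apply (RInt_plus f g); auto. Qed.
Lemma Int_minus f g : Ex f -> Ex g -> Int (fun y => f y - g y) = Int f - Int g.
Proof. intros. apply (RInt_minus f g); auto. Qed.
Lemma Int_scal k f : Ex f -> Int (fun y => k * f y) = k * Int f.
Proof. intros. apply (RInt_scal f); auto. Qed.
Lemma Ex_plus f g : Ex f -> Ex g -> Ex (fun y => f y + g y).
Proof. intros. apply (ex_RInt_plus f g); auto. Qed.
Lemma Ex_minus f g : Ex f -> Ex g -> Ex (fun y => f y - g y).
Proof. intros. apply (ex_RInt_minus f g); auto. Qed.
Lemma Ex_scal k f : Ex f -> Ex (fun y => k * f y).
Proof. intros. apply (ex_RInt_scal f); auto. Qed.
Lemma Int_ext f g : (forall x, -1 <= x <= 1 -> f x = g x) -> Int f = Int g.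
Proof. intros H. apply RInt_ext. intros x. rewrite Rmin_left, Rmax_right by lra. intros; apply H; lra. Qed.
Lemma Ex_ext f g : (forall x, -1 <= x <= 1 -> f x = g x) -> Ex f -> Ex g.
Proof. intros H. apply ex_RInt_ext. intros x. rewrite Rmin_left, Rmax_right by lra. intros; apply H; lra. Qed.

Lemma Ex_sm n (F : nat -> R -> R) : (forall k, (k < n)%nat -> Ex (F k)) -> Ex (fun y => sm n (fun k => F k y)).
Proof.
  induction n; simpl; intros H.
  - apply ex_RInt_const.
  - apply Ex_plus. apply IHn; intros; apply H; lia. apply H; lia.
Qed.

Lemma Int_sm n (F : nat -> R -> R) : (forall k, (k < n)%nat -> Ex (F k)) ->
  Int (fun y => sm n (fun k => F k y)) = sm n (fun k => Int (F k)).
Proof.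
  induction n; simpl; intros H.
  - unfold Int. rewrite RInt_const. compute; ring.
  - rewrite Int_plus. rewrite IHn. auto. intros; apply H; lia.
    apply Ex_sm; intros; apply H; lia. apply H; lia.
Qed.

Lemma is_RInt_sm n (F : nat -> R -> R) v : (forall k, (k < n)%nat -> is_RInt (F k) (-1) 1 (v k)) ->
  is_RInt (fun y => sm n (fun k => F k y)) (-1) 1 (sm n v).
Proof.
  induction n; simpl; intros H.
  - pose proof (is_RInt_const (V:=R_NormedModule) (-1) 1 0) as H0.
    unfold scal in H0; simpl in H0. unfold mult in H0; simpl in H0. rewrite Rmult_0_r in H0. exact H0.
  - apply (is_RInt_plus (fun y => sm n (fun k => F k y)) (F n)). apply IHn; intros; apply H; lia. apply H; lia.
Qed.

Lemma Int_le f g : Ex f -> Ex g -> (forall x, -1 <= x <= 1 -> f x <= g x) -> Int f <= Int g.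
Proof. intros. apply RInt_le; auto; try lra. intros; apply H1; lra. Qed.

Lemma Int_abs_le g h : Ex g -> Ex h -> (forall x, -1 <= x <= 1 -> Rabs (g x) <= h x) -> Rabs (Int g) <= Int h.
Proof.
  intros Hg Hh H. apply Rabs_le. split.
  - assert (Int (fun x => - h x) <= Int g).
    { apply Int_le; auto. apply (ex_RInt_opp h); auto. intros x Hx. specialize (H x Hx). apply Rabs_le_between in H; lra. }
    assert (Int (fun x => - h x) = - Int h) by (apply (RInt_opp h); auto). lra.
  - apply Int_le; auto. intros x Hx. specialize (H x Hx). apply Rabs_le_between in H; lra.
Qed.

Lemma Int_nonneg g : Ex g -> (forall x, -1 <= x <= 1 -> 0 <= g x) -> 0 <= Int g.
Proof. intros. apply RInt_ge_0; auto; try lra. intros; apply H0; lra. Qed.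


Lemma cont_negpow k x : cont (fun y => (- y) ^ k) x.
Proof. apply (ex_derive_continuous (K:=R_AbsRing) (V:=R_NormedModule)). auto_derive; auto. Qed.

Lemma Int_gsm n (a : nat -> R) (h : nat -> R -> R) g : C1 g -> (forall i x, cont (h i) x) ->
  Int (fun x => g x * sm n (fun i => a i * h i x)) = sm n (fun i => a i * Int (fun x => h i x * g x)).
Proof.
  intros Hg Hh.
  rewrite (Int_ext _ (fun x => sm n (fun i => a i * (h i x * g x)))).
  2:{ intros x _. rewrite <- (sm_scal (g x)). apply sm_ext; intros; ring. }
  rewrite Int_sm. apply sm_ext; intros i _. apply Int_scal.
  apply C1_ex, C1_mult; auto. apply Call_C1; auto.
  intros i _. apply Ex_scal. apply C1_ex, C1_mult; auto. apply Call_C1; auto.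
Qed.

Lemma expand1 psi x j : C1 psi ->
  Int (fun y => (x - y)^j * psi y) = sm (S j) (fun i => (C j i * x^i) * Int (fun y => (-y)^(j-i) * psi y)).
Proof.
  intros Hp. rewrite <- (Int_gsm (S j) (fun i => C j i * x^i) (fun i y => (-y)^(j-i)) psi); auto.
  all: try (intros; apply cont_negpow).
  apply Int_ext; intros y _. replace (x - y) with (x + - y) by ring. rewrite binomial, sum_f_R0_sm.
  rewrite Rmult_comm; try (f_equal; apply sm_ext; intros; ring).
Qed.

Lemma expand2 phi x j : C1 phi ->
  Int (fun y => (y - x)^j * phi y) = sm (S j) (fun i => (C j i * (-x)^(j-i)) * Int (fun y => y^i * phi y)).
Proof.
  intros Hp. rewrite <- (Int_gsm (S j) (fun i => C j i * (-x)^(j-i)) (fun i y => y^i) phi); auto.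
  all: try (intros; apply cont_pow).
  apply Int_ext; intros y _. replace (y - x) with (y + - x) by ring. rewrite binomial, sum_f_R0_sm.
  rewrite Rmult_comm; try (f_equal; apply sm_ext; intros; ring).
Qed.

Lemma inner1_cont psi j x : C1 psi -> cont (fun x => Int (fun y => (x - y)^j * psi y)) x.
Proof.
  intros Hp. apply (continuous_ext (fun x => sm (S j) (fun i => (C j i * x^i) * Int (fun y => (-y)^(j-i) * psi y)))).
  intros; symmetry; apply expand1; auto.
  apply cont_sm. intros. apply cont_mult. apply cont_mult. apply cont_const. apply cont_pow. apply cont_const.
Qed.

Lemma inner2_cont phi j x : C1 phi -> cont (fun x => Int (fun y => (y - x)^j * phi y)) x.
Proof.
  intros Hp. apply (continuous_ext (fun x => sm (S j) (fun i => (C j i * (-x)^(j-i)) * Int (fun y => y^i * phi y)))).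
  intros; symmetry; apply expand2; auto.
  apply cont_sm. intros. apply cont_mult. apply cont_mult. apply cont_const. apply cont_negpow. apply cont_const.
Qed.

Lemma Fpow phi psi j : C1 phi -> C1 psi ->
  Int (fun x => phi x * Int (fun y => (x - y)^j * psi y)) = Int (fun x => psi x * Int (fun y => (y - x)^j * phi y)).
Proof.
  intros H1 H2.
  rewrite (Int_ext _ (fun x => phi x * sm (S j) (fun i => (C j i * Int (fun y => (-y)^(j-i) * psi y)) * x^i))).
  2:{ intros x _. rewrite expand1 by auto. f_equal. apply sm_ext; intros; ring. }
  rewrite (Int_ext (fun x => psi x * _) (fun x => psi x * sm (S j) (fun i => (C j i * Int (fun y => y^i * phi y)) * (-x)^(j-i)))).
  2:{ intros x _. rewrite expand2 by auto. f_equal. apply sm_ext; intros; ring. }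
  rewrite !Int_gsm; auto. 2: intros; apply cont_negpow. 2: intros; apply cont_pow.
  apply sm_ext; intros; ring.
Qed.

Lemma W_par c j s : W c j * (-s)^j = W c j * s^j.
Proof.
  destruct (Nat.Even_or_Odd j) as [[i ->]|[i ->]].
  - rewrite !pow_mult. replace ((-s)^2) with (s^2) by ring. auto.
  - unfold W, Dj. replace (S (2*i+1)) with (2*(S i))%nat by lia. rewrite Dsin_even. unfold Rdiv. ring.
Qed.

Lemma cont_xy x j y : cont (fun y => (x - y)^j) y.
Proof. apply (continuous_ext (fun y => (-1 * y + x)^j)). intros; f_equal; ring. 
  apply (ex_derive_continuous (K:=R_AbsRing) (V:=R_NormedModule)). auto_derive; auto. Qed.

Lemma innerQ psi m c x : C1 psi ->
  Int (fun y => Q m c (x - y) * psi y) = sm m (fun j => W c j * Int (fun y => (x - y)^j * psi y)).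
Proof.
  intros Hp. unfold Q.
  rewrite (Int_ext _ (fun y => sm m (fun j => W c j * ((x - y)^j * psi y)))).
  2:{ intros y _. rewrite Rmult_comm, <- sm_scal. apply sm_ext; intros; ring. }
  rewrite Int_sm. apply sm_ext; intros j _. apply Int_scal.
  apply C1_ex, C1_mult; auto. apply Call_C1; intros; apply cont_xy.
  intros j _; apply Ex_scal. apply C1_ex, C1_mult; auto. apply Call_C1; intros; apply cont_xy.
Qed.

Lemma innerQ_cont psi m c x : C1 psi -> cont (fun x => Int (fun y => Q m c (x - y) * psi y)) x.
Proof.
  intros Hp. apply (continuous_ext (fun x => sm m (fun j => W c j * Int (fun y => (x - y)^j * psi y)))).
  intros; symmetry; apply innerQ; auto.
  apply cont_sm. intros. apply cont_mult. apply cont_const. apply inner1_cont; auto.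
Qed.

Lemma FubQ phi psi m c : C1 phi -> C1 psi ->
  Int (fun x => phi x * Int (fun y => Q m c (x - y) * psi y)) = Int (fun x => psi x * Int (fun y => Q m c (x - y) * phi y)).
Proof.
  intros H1 H2.
  rewrite (Int_ext (fun x => phi x * _) (fun x => phi x * sm m (fun j => W c j * Int (fun y => (x - y)^j * psi y)))).
  2:{ intros; rewrite innerQ; auto. }
  rewrite (Int_ext (fun x => psi x * _) (fun x => psi x * sm m (fun j => W c j * Int (fun y => (x - y)^j * phi y)))).
  2:{ intros; rewrite innerQ; auto. }
  rewrite !Int_gsm; auto. 2,3: intros; apply inner1_cont; auto.
  apply sm_ext; intros j _.
  rewrite (Int_ext (fun x => Int (fun y => (x - y)^j * phi y) * psi x) (fun x => psi x * Int (fun y => (x - y)^j * phi y))) by (intros; ring).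
  rewrite (Fpow psi phi j) by auto.
  destruct (Nat.Even_or_Odd j) as [[i ->]|[i ->]].
  - f_equal. apply Int_ext; intros x _. rewrite Rmult_comm. f_equal. apply Int_ext; intros y _.
    replace (y - x) with (-(x-y)) by ring. rewrite !pow_mult. replace ((-(x-y))^2) with ((x-y)^2) by ring. auto.
  - unfold W, Dj. replace (S (2*i+1)) with (2*(S i))%nat by lia. rewrite Dsin_even. unfold Rdiv. ring.
Qed.


Lemma sm_zero n : sm n (fun _ => 0) = 0.
Proof. induction n; simpl; auto. rewrite IHn; ring. Qed.

Lemma linalg N : forall m, (m < N)%nat -> forall g : nat -> nat -> R,
  exists al : nat -> R, (exists k, (k < N)%nat /\ al k <> 0) /\
    forall j, (j < m)%nat -> sm N (fun k => al k * g j k) = 0.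
Proof.
  induction N as [|N IH]; intros m Hm g; [lia|].
  destruct (classic (exists j, (j < m)%nat /\ g j N <> 0)) as [[j0 [Hj0 Hg0]]|Hno].
  - destruct m as [|m']; [lia|].
    set (skip := fun i => if Nat.ltb i j0 then i else S i).
    set (h := fun i k => g (skip i) k - g (skip i) N * g j0 k / g j0 N).
    destruct (IH m' ltac:(lia) h) as [be [[k0 [Hk0 Hbe]] Heq]].
    set (B := sm N (fun k => be k * g j0 k)).
    exists (fun k => if Nat.ltb k N then be k else - B / g j0 N).
    split.
    + exists k0. split; [lia|]. destruct (Nat.ltb_spec k0 N); [auto|lia].
    + intros j Hj. simpl.
      rewrite (sm_ext _ _ (fun k => be k * g j k)).
      2:{ intros k Hk. destruct (Nat.ltb_spec k N); [auto|lia]. }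
      destruct (Nat.ltb_spec N N); [lia|].
      destruct (Nat.eq_dec j j0) as [->|Hne].
      * fold B. field. auto.
      * set (i := if Nat.ltb j j0 then j else pred j).
        assert (Hi : (i < m')%nat /\ skip i = j).
        { unfold i, skip. destruct (Nat.ltb_spec j j0).
          - destruct (Nat.ltb_spec j j0); [split; lia | lia].
          - destruct (Nat.ltb_spec (pred j) j0); [lia|]. split; lia. }
        destruct Hi as [Hi Hs].
        specialize (Heq i Hi). unfold h in Heq. rewrite Hs in Heq.
        rewrite (sm_ext _ _ (fun k => be k * g j k + (- (g j N / g j0 N)) * (be k * g j0 k))) in Heq.
        2:{ intros; field; auto. }
        rewrite sm_plus, sm_scal in Heq. fold B in Heq.
        replace (sm N (fun k => be k * g j k) + - B / g j0 N * g j N) with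
          (sm N (fun k => be k * g j k) + - (g j N / g j0 N) * B) by (field; auto).
        exact Heq.
  - exists (fun k => if Nat.eqb k N then 1 else 0). split.
    + exists N. split; [lia|]. rewrite Nat.eqb_refl. lra.
    + intros j Hj. simpl. rewrite Nat.eqb_refl.
      rewrite (sm_ext _ _ (fun _ => 0)).
      2:{ intros k Hk. destruct (Nat.eqb_spec k N); [lia|]. ring. }
      rewrite sm_zero.
      assert (g j N = 0). { apply NNPP; intro Hc; apply Hno; exists j; auto. }
      rewrite H; ring.
Qed.


Lemma C1_abs f : C1 f -> C1 (fun x => Rabs (f x)).
Proof. intros H x Hx. apply continuous_Rabs_comp. apply H; auto. Qed.

Lemma Int_const a : Int (fun _ => a) = 2 * a.
Proof. unfold Int. rewrite RInt_const. unfold scal; simpl. unfold mult; simpl. ring. Qed.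

Lemma C1_of_eig c mu psi : is_eigenfunction c mu psi -> C1 psi.
Proof. intros [H _] x Hx. apply continuity_pt_filterlim. apply H; auto. Qed.

Lemma eig_is_RInt c mu psi x : is_eigenfunction c mu psi -> -1 <= x <= 1 ->
  is_RInt (fun y => sinc_kernel c (x - y) * psi y) (-1) 1 (mu * psi x).
Proof.
  intros [_ [_ H]] Hx. destruct (H x Hx) as [pr Hpr].
  rewrite <- Hpr, <- RInt_Reals. apply (RInt_correct (V:=R_CompleteNormedModule)).
  apply ex_RInt_Reals_1; auto.
Qed.

Lemma Int_pos psi x0 : C1 psi -> -1 <= x0 <= 1 -> psi x0 <> 0 -> 0 < Int (fun x => psi x * psi x).
Proof.
  intros Hc Hx0 Hn. set (g := fun x => psi x * psi x).
  assert (Hg : C1 g) by (apply C1_mult; auto).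
  assert (Hg0 : 0 < g x0) by (unfold g; nra).
  assert (Hcp : continuity_pt g x0) by (apply continuity_pt_filterlim; apply Hg; auto).
  destruct (Hcp (g x0 / 2) ltac:(lra)) as [d [Hd Hdd]].
  set (p := Rmax (-1) (x0 - d/2)). set (q := Rmin 1 (x0 + d/2)).
  assert (Hp1 : -1 <= p) by apply Rmax_l. assert (Hq1 : q <= 1) by apply Rmin_l.
  assert (Hpq : p < q).
  { unfold p, q. unfold Rmax, Rmin. destruct (Rle_dec (-1) (x0 - d/2)); destruct (Rle_dec 1 (x0 + d/2)); lra. }
  assert (Hpx : x0 - d/2 <= p) by apply Rmax_r. assert (Hqx : q <= x0 + d/2) by apply Rmin_r.
  assert (Hcont : forall a b, -1 <= a -> a <= b -> b <= 1 -> ex_RInt g a b).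
  { intros a b Ha Hab Hb. apply (ex_RInt_continuous (V:=R_CompleteNormedModule)). intros z.
    rewrite Rmin_left, Rmax_right by lra. intros; apply Hg; lra. }
  assert (E1 : RInt g (-1) 1 = RInt g (-1) p + (RInt g p q + RInt g q 1)).
  { pose proof (RInt_Chasles g (-1) p 1 ltac:(apply Hcont; lra) ltac:(apply Hcont; lra)) as K1.
    pose proof (RInt_Chasles g p q 1 ltac:(apply Hcont; lra) ltac:(apply Hcont; lra)) as K2.
    simpl in K1, K2. unfold plus in K1, K2; simpl in K1, K2. lra. }
  assert (0 <= RInt g (-1) p). { apply RInt_ge_0; auto. apply Hcont; lra. intros z _; unfold g; pose proof (Rle_0_sqr (psi z)) as Hz; unfold Rsqr in Hz; lra. }
  assert (0 <= RInt g q 1). { apply RInt_ge_0; auto. apply Hcont; lra. intros z _; unfold g; pose proof (Rle_0_sqr (psi z)) as Hz; unfold Rsqr in Hz; lra. }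
  assert (0 < RInt g p q).
  { apply RInt_gt_0; auto. intros x Hx. 
    destruct (Req_dec x x0) as [->|Hne]; [lra|].
    assert (Rabs (g x - g x0) < g x0 / 2).
    { apply Hdd. split. split. constructor. auto. simpl. unfold R_dist. apply Rabs_def1; lra. }
    apply Rabs_def2 in H1. lra.
    intros; apply Hg; lra. }
  unfold Int. fold g. lra.
Qed.

Lemma exp_pow_n a n : exp a ^ n = exp (INR n * a).
Proof. induction n. simpl. rewrite Rmult_0_l, exp_0; auto. rewrite S_INR. simpl. rewrite IHn, <- exp_plus. f_equal; ring. Qed.

Lemma step_fact n : INR (S n) ^ n <= exp 1 * INR n ^ n.
Proof.
  destruct n. simpl. pose proof (exp_ineq1 1 ltac:(lra)). lra.
  assert (HS : 0 < INR (S n)) by (apply lt_0_INR; lia).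
  assert (INR (S (S n)) <= INR (S n) * exp (1 / INR (S n))).
  { rewrite (S_INR (S n)). pose proof (exp_ineq1 (1 / INR (S n)) ltac:(apply Rgt_not_eq, Rdiv_lt_0_compat; lra)).
    replace (INR (S n) + 1) with (INR (S n) * (1 + 1 / INR (S n))) by (field; lra).
    apply Rmult_le_compat_l; lra. }
  apply Rle_trans with ((INR (S n) * exp (1 / INR (S n))) ^ (S n)).
  apply pow_incr. split; auto. apply pos_INR.
  rewrite Rpow_mult_distr, exp_pow_n. replace (INR (S n) * (1 / INR (S n))) with 1 by (field; lra). right; ring.
Qed.

Lemma fact_bound M : INR M ^ M <= exp (INR M) * INR (fact M).
Proof.
  induction M. simpl. rewrite exp_0. lra.
  rewrite fact_simpl, mult_INR. rewrite <- tech_pow_Rmult.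
  pose proof (step_fact M). assert (0 <= INR (S M)) by apply pos_INR.
  apply Rle_trans with (INR (S M) * (exp 1 * INR M ^ M)). apply Rmult_le_compat_l; auto.
  apply Rle_trans with (INR (S M) * (exp 1 * (exp (INR M) * INR (fact M)))).
  apply Rmult_le_compat_l; auto. apply Rmult_le_compat_l; auto. left; apply exp_pos.
  right. replace (exp (INR (S M))) with (exp (INR M) * exp 1) by (rewrite <- exp_plus, S_INR; auto). ring.
Qed.

Lemma final_num delta c n : 0 < delta -> 0 <= c -> 2 * exp (1 + delta) * c <= INR n ->
  2 * eps n c <= exp (- delta * (INR n - 2 * exp (1 + delta) * c)).
Proof.
  intros Hd Hc Hn. set (k := 2 * exp (1 + delta)). fold k in Hn.
  assert (Hk : 0 < k) by (unfold k; pose proof (exp_pos (1+delta)); lra).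
  set (M := S n). assert (HM : 0 < INR M) by (apply lt_0_INR; unfold M; lia).
  assert (HMn : INR M = INR n + 1) by (unfold M; apply S_INR).
  pose proof PI_pos'. assert (1 < PI) by (pose proof PI2_1; lra).
  assert (Hf : 0 < INR (fact M)) by apply INR_fact_lt_0.
  assert (H1 : 2 * eps n c <= (2*c)^M / INR (fact M)).
  { unfold eps. fold M. replace M with (S n) by auto. rewrite <- tech_pow_Rmult. 
    unfold Rdiv. 
    assert (0 <= (2*c)^n) by (apply pow_le; lra). assert (0 < / INR (fact (S n))) by (apply Rinv_0_lt_compat; auto).
    assert (Hcp : c * / PI <= c). { apply Rle_trans with (c * 1). apply Rmult_le_compat_l; auto. 
      apply Rle_trans with (/1). left. apply Rinv_lt_contravar; lra. lra. lra. }
    assert (E5 : 2 * (c * / PI) * (2 * c) ^ n * / INR (fact (S n)) = (2 * (c * / PI)) * ((2 * c) ^ n * / INR (fact (S n)))) by ring.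
    assert (E6 : 2 * c * (2 * c) ^ n * / INR (fact (S n)) = (2 * c) * ((2 * c) ^ n * / INR (fact (S n)))) by ring.
    replace (2 * (c * / PI * (2 * c) ^ n * / INR (fact (S n)))) with (2 * (c * / PI) * (2 * c) ^ n * / INR (fact (S n))) by ring.
    rewrite E5, E6. apply Rmult_le_compat_r. apply Rmult_le_pos; lra. lra. }
  assert (H2 : (2*c)^M / INR (fact M) <= (2 * c * exp 1 / INR M)^M).
  { pose proof (fact_bound M) as Hfb.
    assert (Hpw : 0 < INR M ^ M) by (apply pow_lt; auto).
    assert (Hc2 : 0 <= (2*c)^M) by (apply pow_le; lra).
    assert (Eq : (2 * c * exp 1 / INR M)^M = (2*c)^M * exp (INR M) / INR M ^ M).
    { unfold Rdiv. rewrite !Rpow_mult_distr. rewrite pow_inv. rewrite exp_pow_n. rewrite Rmult_1_r. ring. }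
    rewrite Eq.
    apply Rmult_le_reg_r with (INR (fact M) * INR M ^ M). apply Rmult_lt_0_compat; auto.
    replace ((2 * c) ^ M / INR (fact M) * (INR (fact M) * INR M ^ M)) with ((2*c)^M * INR M ^ M) by (field; lra).
    replace ((2 * c) ^ M * exp (INR M) / INR M ^ M * (INR (fact M) * INR M ^ M)) with ((2*c)^M * (exp (INR M) * INR (fact M))) by (field; lra).
    apply Rmult_le_compat_l; auto. }
  assert (H3 : 2 * c * exp 1 / INR M <= exp (- delta)).
  { apply Rmult_le_reg_r with (INR M); auto. unfold Rdiv. rewrite Rmult_assoc, Rinv_l, Rmult_1_r by lra.
    assert (Hkc : k * c <= INR M) by lra. unfold k in Hkc. rewrite exp_plus in Hkc.
    assert (He1 : exp 1 = exp (1 + delta) * exp (- delta)) by (rewrite <- exp_plus; f_equal; ring).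
    rewrite He1. rewrite exp_plus. pose proof (exp_pos (-delta)). pose proof (exp_pos delta).
    assert (exp delta * exp (- delta) = 1) by (rewrite <- exp_plus, <- exp_0; f_equal; ring).
    nra. }
  assert (H4 : (2 * c * exp 1 / INR M)^M <= exp (-delta)^M).
  { apply pow_incr. split; auto. apply Rdiv_le_0_compat; auto. pose proof (exp_pos 1). nra. }
  rewrite exp_pow_n in H4.
  assert (exp (INR M * - delta) <= exp (- delta * (INR n - k * c))).
  { destruct (Req_dec (INR M * - delta) (- delta * (INR n - k * c))) as [->|]; [lra|]. left. apply exp_increasing.
    assert (0 <= k * c) by nra. nra. }
  lra.
Qed.


Lemma cont_Qxy m c x y : cont (fun y => Q m c (x - y)) y.
Proof.
  unfold Q. apply (continuous_ext (fun y => sm m (fun j => W c j * (x - y)^j))). auto.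
  apply cont_sm. intros; apply cont_mult. apply cont_const. apply cont_xy.
Qed.

Lemma rem_bound c m f G : 0 <= c -> C1 f ->
  (forall x, -1 <= x <= 1 -> is_RInt (fun y => sinc_kernel c (x - y) * f y) (-1) 1 (G x)) ->
  forall x, -1 <= x <= 1 -> Rabs (G x - Int (fun y => Q m c (x - y) * f y)) <= eps m c * Int (fun y => Rabs (f y)).
Proof.
  intros Hc Hf HG x Hx.
  assert (E1 : G x = Int (fun y => sinc_kernel c (x - y) * f y)).
  { symmetry. apply is_RInt_unique. apply HG; auto. }
  assert (Ex1 : Ex (fun y => sinc_kernel c (x - y) * f y)) by (exists (G x); apply HG; auto).
  assert (Ex2 : Ex (fun y => Q m c (x - y) * f y)).
  { apply C1_ex, C1_mult; auto. apply Call_C1; intros; apply cont_Qxy. }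
  rewrite E1, <- Int_minus by auto.
  rewrite <- Int_scal. 2: apply C1_ex, C1_abs; auto.
  apply Int_abs_le. apply Ex_minus; auto. apply Ex_scal, C1_ex, C1_abs; auto.
  intros y Hy.
  replace (sinc_kernel c (x - y) * f y - Q m c (x - y) * f y) with ((sinc_kernel c (x - y) - Q m c (x - y)) * f y) by ring.
  rewrite Rabs_mult. apply Rmult_le_compat_r. apply Rabs_pos.
  apply approx; auto. apply Rabs_le; lra.
Qed.

Lemma Int_gsm1 n (a : nat -> R) (h : nat -> R -> R) g : C1 g -> (forall i, C1 (h i)) ->
  Int (fun x => g x * sm n (fun i => a i * h i x)) = sm n (fun i => a i * Int (fun x => h i x * g x)).
Proof.
  intros Hg Hh.
  rewrite (Int_ext _ (fun x => sm n (fun i => a i * (h i x * g x)))).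
  2:{ intros x _. rewrite <- (sm_scal (g x)). apply sm_ext; intros; ring. }
  rewrite Int_sm. apply sm_ext; intros i _. apply Int_scal.
  apply C1_ex, C1_mult; auto.
  intros i _. apply Ex_scal. apply C1_ex, C1_mult; auto.
Qed.

Lemma eps_le m c : 0 <= c -> eps m c <= c / PI * ((2*c)^m / INR (fact m)).
Proof.
  intros Hc. unfold eps. pose proof PI_pos'. 
  assert (H1 : INR (fact m) <= INR (fact (S m))) by (apply le_INR, fact_le; lia).
  pose proof (INR_fact_lt_0 m).
  unfold Rdiv. rewrite Rmult_assoc. apply Rmult_le_compat_l. apply Rmult_le_pos; auto. left; apply Rinv_0_lt_compat; auto.
  apply Rmult_le_compat_l. apply pow_le; lra. apply Rinv_le_contravar; auto.
Qed.

Lemma orth c m1 m2 phi psi : 0 <= c -> is_eigenfunction c m1 phi -> is_eigenfunction c m2 psi -> m1 <> m2 ->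
  Int (fun x => phi x * psi x) = 0.
Proof.
  intros Hc E1 E2 Hne.
  pose proof (C1_of_eig _ _ _ E1) as C1p. pose proof (C1_of_eig _ _ _ E2) as C2p.
  set (Ap := Int (fun y => Rabs (phi y))). set (As := Int (fun y => Rabs (psi y))).
  assert (HAp : 0 <= Ap) by (apply Int_nonneg; [apply C1_ex, C1_abs; auto | intros; apply Rabs_pos]).
  assert (HAs : 0 <= As) by (apply Int_nonneg; [apply C1_ex, C1_abs; auto | intros; apply Rabs_pos]).
  set (I := Int (fun x => phi x * psi x)).
  assert (Key : forall m, Rabs ((m2 - m1) * I) <= 2 * eps m c * Ap * As).
  { intros m.
    assert (Dec : forall (u v : R -> R) mu, C1 u -> C1 v -> is_eigenfunction c mu v ->
      Rabs (mu * Int (fun x => u x * v x) - Int (fun x => u x * Int (fun y => Q m c (x - y) * v y)))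
        <= eps m c * Int (fun y => Rabs (v y)) * Int (fun y => Rabs (u y))).
    { intros u v mu Cu Cv Ev.
      set (IQ := fun x => Int (fun y => Q m c (x - y) * v y)).
      assert (CIQ : C1 IQ) by (apply Call_C1; intros; apply innerQ_cont; auto).
      rewrite <- Int_scal by (apply C1_ex, C1_mult; auto).
      rewrite <- Int_minus. 3: apply C1_ex, C1_mult; auto.
      2: apply Ex_scal, C1_ex, C1_mult; auto.
      replace (eps m c * Int (fun y => Rabs (v y)) * Int (fun y => Rabs (u y))) with
        (Int (fun x => (eps m c * Int (fun y => Rabs (v y))) * Rabs (u x))).
      2:{ apply Int_scal. apply C1_ex, C1_abs; auto. }
      apply Int_abs_le.
      apply Ex_minus. apply Ex_scal, C1_ex, C1_mult; auto. apply C1_ex, C1_mult; auto.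
      apply Ex_scal, C1_ex, C1_abs; auto.
      intros x Hx. replace (mu * (u x * v x) - u x * Int (fun y => Q m c (x - y) * v y)) with
        (u x * (mu * v x - Int (fun y => Q m c (x - y) * v y))) by ring.
      rewrite Rabs_mult. rewrite Rmult_comm. apply Rmult_le_compat_r. apply Rabs_pos.
      apply (rem_bound c m v (fun x => mu * v x)); auto.
      intros; apply eig_is_RInt; auto. }
    pose proof (Dec phi psi m2 C1p C2p E2) as D1.
    pose proof (Dec psi phi m1 C2p C1p E1) as D2.
    rewrite FubQ in D1 by auto.
    rewrite (Int_ext (fun x => psi x * phi x) (fun x => phi x * psi x)) in D2 by (intros; ring).
    fold I Ap As in D1, D2.
    replace ((m2 - m1) * I) with ((m2 * I - Int (fun x => psi x * Int (fun y => Q m c (x - y) * phi y))) -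
      (m1 * I - Int (fun x => psi x * Int (fun y => Q m c (x - y) * phi y)))) by ring.
    eapply Rle_trans. apply Rabs_triang. rewrite Rabs_Ropp. lra. }
  destruct (Req_dec I 0) as [|HI]; auto. exfalso.
  set (T := Rabs ((m2 - m1) * I)).
  assert (HT : 0 < T). { unfold T. rewrite Rabs_mult. apply Rmult_lt_0_compat; apply Rabs_pos_lt; lra. }
  set (B := 2 * (c / PI) * Ap * As).
  assert (HB : 0 <= B). { unfold B. pose proof PI_pos'. assert (0 <= c / PI) by (apply Rdiv_le_0_compat; lra). 
    apply Rmult_le_pos; auto. apply Rmult_le_pos; auto. lra. }
  destruct (cv_speed_pow_fact (2*c) (T / (B + 1)) ltac:(apply Rdiv_lt_0_compat; lra)) as [m Hm].
  specialize (Hm m (le_n m)). unfold R_dist in Hm. rewrite Rminus_0_r in Hm.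
  set (z := (2*c)^m / INR (fact m)) in Hm.
  assert (Hz : 0 <= z). { unfold z. apply Rdiv_le_0_compat. apply pow_le; lra. apply INR_fact_lt_0. }
  rewrite Rabs_right in Hm by lra.
  specialize (Key m). pose proof (eps_le m c Hc) as He. fold z in He.
  assert (2 * eps m c * Ap * As <= B * z).
  { unfold B. assert (0 <= Ap * As) by nra. 
    replace (2 * eps m c * Ap * As) with (2 * (Ap * As) * eps m c) by ring.
    replace (2 * (c / PI) * Ap * As * z) with (2 * (Ap * As) * (c / PI * z)) by ring.
    apply Rmult_le_compat_l; lra. }
  assert (B * z < T).
  { apply Rle_lt_trans with (B * (T / (B + 1))). apply Rmult_le_compat_l; lra.
    replace (B * (T / (B + 1))) with (T * (B / (B + 1))) by (field; lra).
    assert (B / (B + 1) < 1). { apply Rmult_lt_reg_r with (B + 1); [lra|]. unfold Rdiv. rewrite Rmult_assoc, Rinv_l by lra. lra. }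
    nra. }
  fold T in Key. lra.
Qed.


Lemma sq_bound f : C1 f -> (Int (fun y => Rabs (f y)))^2 <= 2 * Int (fun y => f y * f y).
Proof.
  intros Hf. set (A := Int (fun y => Rabs (f y))). set (t := A / 2).
  assert (H0 : 0 <= Int (fun y => (Rabs (f y) - t)^2)).
  { apply Int_nonneg. apply C1_ex. intros x Hx. apply (continuous_ext (fun y => (Rabs (f y) - t) * ((Rabs (f y) - t) * 1))).
    intros; simpl; auto. apply cont_mult. apply cont_plus. apply C1_abs; auto. apply cont_const.
    apply cont_mult. apply cont_plus. apply C1_abs; auto. apply cont_const. apply cont_const.
    intros; apply pow2_ge_0. }
  rewrite (Int_ext _ (fun y => (f y * f y + (-2 * t) * Rabs (f y)) + t^2)) in H0.
  2:{ intros. replace (f x * f x) with (Rabs (f x) * Rabs (f x)). ring.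
      rewrite <- Rabs_mult. apply Rabs_right. pose proof (Rle_0_sqr (f x)). unfold Rsqr in H1. lra. }
  assert (Ef2 : Ex (fun y => f y * f y)) by (apply C1_ex, C1_mult; auto).
  assert (Eab : Ex (fun y => Rabs (f y))) by (apply C1_ex, C1_abs; auto).
  assert (Eab2 : Ex (fun y => -2 * t * Rabs (f y))) by (apply Ex_scal; auto).
  rewrite Int_plus in H0. 2: apply Ex_plus; auto. 2: apply ex_RInt_const.
  rewrite Int_plus in H0 by auto.
  rewrite Int_scal in H0 by auto. rewrite Int_const in H0.
  fold A in H0. unfold t in H0. lra.
Qed.

Lemma lam_mono (lam : nat -> R) : (forall n, lam (S n) < lam n) -> forall k d, lam (k + d)%nat <= lam k.
Proof. intros H k d. induction d. rewrite Nat.add_0_r; lra. rewrite Nat.add_succ_r. specialize (H (k + d)%nat). lra. Qed.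

Lemma lam_inj (lam : nat -> R) : (forall n, lam (S n) < lam n) -> forall k l, k <> l -> lam k <> lam l.
Proof.
  intros H k l Hkl. assert (forall a b, (a < b)%nat -> lam b < lam a).
  { intros a b Hab. replace b with (S a + (b - S a))%nat by lia. pose proof (lam_mono lam H (S a) (b - S a)). specialize (H a). lra. }
  destruct (Nat.lt_gt_cases k l) as [[Hl|Hl] _]; auto. apply H0 in Hl; lra. apply H0 in Hl; lra.
Qed.

Lemma main_bound c lam n : 0 <= c -> prolate_eigenvalues c lam -> lam n <= 2 * eps n c.
Proof.
  intros Hc [Hpos [Hdec [Heig Hall]]].
  set (psi := fun k => proj1_sig (constructive_indefinite_description _ (Heig k))).
  assert (Hpsi : forall k, is_eigenfunction c (lam k) (psi k)).
  { intros k. unfold psi. destruct (constructive_indefinite_description _ (Heig k)); auto. }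
  assert (Cpsi : forall k, C1 (psi k)) by (intros; eapply C1_of_eig; eauto).
  assert (Horth : forall k l, k <> l -> Int (fun x => psi k x * psi l x) = 0).
  { intros k l Hkl. eapply orth; eauto. apply lam_inj; auto. }
  set (P := fun k => Int (fun x => psi k x * psi k x)).
  assert (HP : forall k, 0 < P k).
  { intros k. destruct (Hpsi k) as [_ [[x0 [Hx0 Hn0]] _]]. apply (Int_pos (psi k) x0); auto. }
  destruct (linalg (S n) n (Nat.lt_succ_diag_r n) (fun j k => Int (fun y => y^j * psi k y))) as [al [[k0 [Hk0 Hal0]] Heq]].
  set (f := fun y => sm (S n) (fun k => al k * psi k y)).
  assert (Cf : C1 f). { apply C1_sm. intros. apply C1_mult; auto. apply Call_C1; intros; apply cont_const. }
  assert (Hmom : forall j, (j < n)%nat -> Int (fun y => y^j * f y) = 0).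
  { intros j Hj. rewrite <- (Heq j Hj). unfold f.
    rewrite (Int_ext _ (fun y => sm (S n) (fun k => al k * (y^j * psi k y)))).
    2:{ intros; rewrite <- sm_scal. apply sm_ext; intros; ring. }
    rewrite Int_sm. apply sm_ext; intros; apply Int_scal. apply C1_ex, C1_pow_mult; auto.
    intros; apply Ex_scal, C1_ex, C1_pow_mult; auto. }
  assert (HIQ : forall x, Int (fun y => Q n c (x - y) * f y) = 0).
  { intros x. rewrite innerQ by auto. rewrite <- (sm_zero n). apply sm_ext. intros j Hj.
    rewrite expand1 by auto. rewrite (sm_ext _ _ (fun _ => 0)). rewrite sm_zero; ring.
    intros i Hi. rewrite (Int_ext _ (fun y => (-1)^(j-i) * (y^(j-i) * f y))).
    2:{ intros y _; replace (-y) with (-1 * y) by ring. rewrite Rpow_mult_distr. ring. }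
    rewrite Int_scal, Hmom. ring. lia. apply C1_ex, C1_pow_mult; auto. }
  set (G := fun x => sm (S n) (fun k => (al k * lam k) * psi k x)).
  assert (HG : forall x, -1 <= x <= 1 -> is_RInt (fun y => sinc_kernel c (x - y) * f y) (-1) 1 (G x)).
  { intros x Hx. unfold f, G.
    apply (is_RInt_ext (fun y => sm (S n) (fun k => al k * (sinc_kernel c (x - y) * psi k y)))).
    { intros y _. rewrite <- sm_scal. apply sm_ext; intros; ring. }
    apply is_RInt_sm. intros k _.
    replace (al k * lam k * psi k x) with (al k * (lam k * psi k x)) by ring.
    apply (is_RInt_scal (fun y => sinc_kernel c (x - y) * psi k y)). apply eig_is_RInt; auto. }
  set (A := Int (fun y => Rabs (f y))).
  assert (HA : 0 <= A) by (apply Int_nonneg; [apply C1_ex, C1_abs; auto | intros; apply Rabs_pos]).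
  assert (HGb : forall x, -1 <= x <= 1 -> Rabs (G x) <= eps n c * A).
  { intros x Hx. pose proof (rem_bound c n f G Hc Cf HG x Hx) as R. rewrite HIQ, Rminus_0_r in R. exact R. }
  assert (Hpf : forall k, (k < S n)%nat -> Int (fun x => psi k x * f x) = al k * P k).
  { intros k Hk. unfold f. rewrite Int_gsm1; auto. rewrite (sm_single _ _ k); auto.
    intros l Hl Hlk. rewrite Horth; auto. ring. }
  set (Nf := Int (fun x => f x * f x)).
  assert (HNf : Nf = sm (S n) (fun k => al k * al k * P k)).
  { unfold Nf. rewrite (Int_ext _ (fun x => f x * sm (S n) (fun k => al k * psi k x))) by auto.
    rewrite Int_gsm1; auto. apply sm_ext; intros k Hk. rewrite Hpf; auto. ring. }
  assert (HfG : Int (fun x => f x * G x) = sm (S n) (fun k => lam k * (al k * al k * P k))).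
  { unfold G. rewrite Int_gsm1; auto. apply sm_ext; intros k Hk. rewrite Hpf; auto. ring. }
  assert (Low : lam n * Nf <= Int (fun x => f x * G x)).
  { rewrite HfG, HNf, <- sm_scal. apply sm_le. intros k Hk. 
    assert (0 <= al k * al k * P k) by (pose proof (HP k); nra).
    assert (lam n <= lam k) by (replace n with (k + (n - k))%nat by lia; apply lam_mono; auto).
    nra. }
  assert (CG : C1 G). { apply C1_sm. intros. apply C1_mult; auto. apply Call_C1; intros; apply cont_const. }
  assert (Up : Int (fun x => f x * G x) <= eps n c * A * A).
  { apply Rle_trans with (Rabs (Int (fun x => f x * G x))). apply Rle_abs.
    replace (eps n c * A * A) with (Int (fun x => (eps n c * A) * Rabs (f x))).
    2:{ apply Int_scal. apply C1_ex, C1_abs; auto. }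
    apply Int_abs_le. apply C1_ex, C1_mult; auto. apply Ex_scal, C1_ex, C1_abs; auto.
    intros x Hx. rewrite Rabs_mult, Rmult_comm. apply Rmult_le_compat_r. apply Rabs_pos. auto. }
  assert (Hsq : A^2 <= 2 * Nf) by (apply sq_bound; auto).
  assert (HNpos : 0 < Nf).
  { rewrite HNf. apply (sm_pos _ _ k0); auto. intros; pose proof (HP l); nra.
    pose proof (HP k0). assert (0 < al k0 * al k0) by (pose proof (Rle_0_sqr (al k0)); destruct (Rtotal_order (al k0) 0) as [h|[h|h]]; nra). nra. }
  pose proof (eps_nonneg n c Hc).
  assert (lam n * Nf <= 2 * eps n c * Nf) by nra.
  apply Rmult_le_reg_r with Nf; auto.
Qed.


Theorem theorem3 (delta : R) (hdelta : 0 < delta) :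
  exists (N : nat) (kappa : R), 0 < kappa /\
    forall (c : R) (lam : nat -> R), 0 <= c -> prolate_eigenvalues c lam ->
      forall n : nat, (N <= n)%nat -> kappa * c <= INR n ->
        lam n <= exp (- delta * (INR n - kappa * c)).
Proof.
  exists 0%nat, (2 * exp (1 + delta)). split.
  { pose proof (exp_pos (1 + delta)). lra. }
  intros c lam Hc Hl n _ Hn.
  eapply Rle_trans. apply main_bound; eauto. apply final_num; auto.
Qed.
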